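(* For every $X\in\mathcal{W}_4^3$ and every $0\le j\le 2$, $\tilde H_j(X;\mathbb{Z})=0$.
   Context: $\mathbb{I}_n$ is the hypercube graph on $\{0,1\}^n$ with Hamming distance; $\mathcal{VR}(G;3)$ is the simplicial complex of vertex sets of pairwise Hamming distance $\le 3$. For distinct $j_1,\dots,j_t\in[n]$ and $\epsilon_1,\dots,\epsilon_t\in\{0,1\}$, $\mathbb{I}_n^{(j_1,\epsilon_1),\dots,(j_t,\epsilon_t)}$ is the induced subgraph on $\{v: v(j_l)=\epsilon_l,\ 1\le l\le t\}$; an $m$-dimensional cube subgraph is one of these with $t=n-m$ (with $t=0$ giving $\mathbb{I}_n$). For such $H$ and $\lambda\notin\{j_1,\dots,j_t\}$, $\epsilon\in\{0,1\}$, $H^{(\lambda,\epsilon)}$ is the induced subgraph of $H$ on vertices with $v(\lambda)=\epsilon$, and $\partial(\mathcal{VR}(H;3))=\bigcup_{\lambda\notin\{j_l\},\epsilon}\mathcal{VR}(H^{(\lambda,\epsilon)};3)$. For $n\ge4$ and $3\le m\le n$, $\mathcal{W}_n^m$ is the collection of all finite unions $X=X_1\cup\dots\cup X_k$ ($k\ge1$) such that: each $X_j=\mathcal{VR}(H_j;3)$ for some $m$-dimensional cube subgraph $H_j$ of $\mathbb{I}_n$; and if $m\ne n$, then $X\subseteq\mathcal{VR}(H;3)$ for some $(m+1)$-dimensional cube subgraph $H=\mathbb{I}_n^{(j_1,\epsilon_1),\dots,(j_{n-m-1},\epsilon_{n-m-1})}$, and moreover if $X\ne\partial(\mathcal{VR}(H;3))$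 then there exist $\lambda\in[n]\setminus\{j_1,\dots,j_{n-m-1}\}$ and $\epsilon\in\{0,1\}$ with $\mathcal{VR}(H^{(\lambda,\epsilon)};3)\subseteq X$ and $\mathcal{VR}(H^{(\lambda,1-\epsilon)};3)\not\subseteq X$. $\tilde H_j$ is reduced simplicial homology. *)

(* Defs.v *)
From HB Require Import structures.
From mathcomp Require Import all_boot all_order all_algebra.
Set Implicit Arguments. Unset Strict Implicit. Unset Printing Implicit Defensive.
Import Order.TTheory GRing.Theory Num.Theory.
Local Open Scope ring_scope.

Definition cube (n : nat) := {ffun 'I_n -> bool}.

Definition hdist n (v w : cube n) : nat := #|[set i | v i != w i]|.

(** A cube subgraph I_n^{(j_1,e_1),...,(j_t,e_t)} is encoded by a partial
    assignment f : 'I_n -> option bool : f i = Some e means coordinate i is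
    fixed to e (i is one of the j_l), f i = None means coordinate i is free. *)
Definition subcube (n : nat) := {ffun 'I_n -> option bool}.

Definition free_coords n (H : subcube n) : {set 'I_n} := [set i | H i == None].

Definition sc_dim n (H : subcube n) : nat := #|free_coords H|.

Definition sc_verts n (H : subcube n) : {set cube n} :=
  [set v : cube n | [forall i, if H i is Some e then v i == e else true]].

Definition sc_fix n (H : subcube n) (l : 'I_n) (e : bool) : subcube n :=
  [ffun i => if i == l then Some e else H i].

(** Simplicial complexes on the vertex set of I_n, given by their set of
    faces (the empty face is included, which gives the augmented chain
    complex computing reduced homology). *)
Notation complex n := {set {set cube n}}.

Definition VR3 n (H : subcube n) : complex n :=
  [set s : {set cube n} | (s \subset sc_verts H) &&
     [forall x in s, forall y in s, (hdist x y <= 3)%N]].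

Definition bdVR3 n (H : subcube n) : complex n :=
  \bigcup_(l in free_coords H) \bigcup_(e : bool) VR3 (sc_fix H l e).

Definition inW (n m : nat) (X : complex n) : Prop :=
  exists S : {set subcube n},
    [/\ S != set0,
        (forall H, H \in S -> sc_dim H = m),
        X = \bigcup_(H in S) VR3 H &
        (m != n ->
         exists H : subcube n,
           [/\ sc_dim H = m.+1,
               X \subset VR3 H &
               (X != bdVR3 H ->
                exists (l : 'I_n) (e : bool),
                  [/\ l \in free_coords H,
                      VR3 (sc_fix H l e) \subset X &
                      ~~ (VR3 (sc_fix H l (~~ e)) \subset X)])])].

(** Vertices are oriented by the
    order given by enum_rank.  The boundary of an oriented simplex
    [v_0 < ... < v_k] is sum_i (-1)^i [.. omitting v_i ..]; including the
    empty face in dimension -1 yields the augmentation, i.e. reduced chains. *)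
Section Chains.
Variable T : finType.

Definition chain := {ffun {set T} -> int}.

(** sign of v in t :|: [set v] : (-1)^(number of elements of t below v) *)
Definition ord_sign (t : {set T}) (v : T) : int :=
  (-1) ^+ #|[set w in t | (enum_rank w < enum_rank v)%N]|.

Definition bdry (c : chain) : chain :=
  [ffun t : {set T} => \sum_(v : T | v \notin t) ord_sign t v * c (v |: t)].

Definition is_chain_of (X : {set {set T}}) (k : nat) (c : chain) : Prop :=
  forall s, c s != 0 -> s \in X /\ #|s| = k.+1.

Definition reduced_homology_vanishes (X : {set {set T}}) (j : nat) : Prop :=
  forall c : chain, is_chain_of X j c -> bdry c = 0 ->
    exists d : chain, is_chain_of X j.+1 d /\ bdry d = c.
End Chains.

Arguments inW n m X : clear implicits.
Arguments reduced_homology_vanishes T X j : clear implicits.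

(* Main.v *)
Require Import Defs.
From HB Require Import structures.
From mathcomp Require Import all_boot all_order all_algebra zify ring.
Set Implicit Arguments. Unset Strict Implicit. Unset Printing Implicit Defensive.
Import Order.TTheory GRing.Theory Num.Theory.

Module GenPart.
Local Open Scope ring_scope.

Section Gen.
Variable T : finType.
Implicit Types (t s : {set T}) (x y c : chain T).

Definition rsg (u v : T) : int := if (enum_rank u < enum_rank v)%N then -1 else 1.

Lemma rsgC u v : u != v -> rsg u v = - rsg v u.
Proof.
move=> huv; rewrite /rsg.
have hr : enum_rank u != enum_rank v.
  by apply/negP => /eqP h; move: huv; rewrite (enum_rank_inj h) eqxx.
case: (ltngtP (enum_rank u) (enum_rank v)) => h //.
by move: hr; rewrite (val_inj h) eqxx.
Qed.

Lemma ord_signU t u v : u \notin t ->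
  ord_sign (u |: t) v = rsg u v * ord_sign t v.
Proof.
move=> hu; rewrite /ord_sign /rsg; case: ifP => h.
  have -> : [set w in u |: t | (enum_rank w < enum_rank v)%N] =
            u |: [set w in t | (enum_rank w < enum_rank v)%N].
    apply/setP => x; rewrite !inE; case: (x =P u) => [->|] //=; by rewrite h.
  by rewrite cardsU1 inE (negbTE hu) /= add1n exprS.
have -> : [set w in u |: t | (enum_rank w < enum_rank v)%N] =
          [set w in t | (enum_rank w < enum_rank v)%N].
  by apply/setP => x; rewrite !inE; case: (x =P u) => [->|] //=; rewrite h andbF.
by rewrite mul1r.
Qed.

Lemma sgsq t v : ord_sign t v * ord_sign t v = 1.
Proof. by rewrite /ord_sign -exprD addnn -mul2n exprM sqrrN expr1n. Qed.

Definition cone (a : T) x : chain T :=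
  [ffun t : {set T} => if a \in t then ord_sign (t :\ a) a * x (t :\ a) else 0].

Lemma bdryB x y : bdry (x - y) = bdry x - bdry y.
Proof.
apply/ffunP => t; rewrite !ffunE -sumrB; apply: eq_bigr => v _.
by rewrite !ffunE mulrBr.
Qed.

Lemma bdryD x y : bdry (x + y) = bdry x + bdry y.
Proof.
apply/ffunP => t; rewrite !ffunE -big_split; apply: eq_bigr => v _.
by rewrite !ffunE mulrDr.
Qed.

Lemma cone0 a : cone a 0 = 0.
Proof. by apply/ffunP => t; rewrite !ffunE; case: ifP; rewrite ?mulr0. Qed.

Lemma bdry_cone a x : bdry (cone a x) = x - cone a (bdry x).
Proof.
apply/ffunP => t; rewrite !ffunE; case: (boolP (a \in t)) => ha.
  rewrite [in RHS](bigD1 a) /=; last by rewrite !inE eqxx.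
  rewrite mulrDr setD1K // mulrA sgsq mul1r opprD addrA subrr add0r.
  set t0 := t :\ a.
  have ht : t = a |: t0 by rewrite /t0 setD1K.
  have ha0 : a \notin t0 by rewrite !inE eqxx.
  rewrite mulr_sumr -sumrN.
  apply: eq_big => [v|v hv].
    by rewrite ht !inE; case: (v == a); case: (v \in t).
  have hva : v != a by apply: contraNneq hv => ->.
  rewrite ffunE.
  have -> : a \in v |: t by rewrite !inE ha orbT.
  have -> : (v |: t) :\ a = v |: t0.
    apply/setP => y; rewrite /t0 !inE; case: (y =P v) => [->|_] /=; first by rewrite hva.
    by rewrite andbC.
  have hv0 : v \notin t0 by apply: contra hv; rewrite ht !inE => ->; rewrite orbT.
  rewrite {1}ht (ord_signU _ ha0) (ord_signU _ hv0) (rsgC hva).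
  by rewrite /rsg; case: ifP => _; ring.
rewrite (bigD1 a) //= big1 ?addr0; last first.
  move=> v /andP [_ hv]; rewrite ffunE !inE eq_sym (negbTE hv) (negbTE ha) /=.
  by rewrite mulr0.
rewrite ffunE setU11 setU1K // mulrA sgsq mul1r.
by [].
Qed.

Lemma bdry2 x : bdry (bdry x) = 0.
Proof.
apply/ffunP => t; rewrite !ffunE.
set f := fun v u => ord_sign t v * (ord_sign (v |: t) u * x (u |: (v |: t))).
have e1 : \sum_(v | v \notin t) ord_sign t v * bdry x (v |: t) =
          \sum_(v | v \notin t) \sum_(u | (u \notin t) && (u != v)) f v u.
  apply: eq_bigr => v hv; rewrite ffunE mulr_sumr.
  apply: eq_big => u; first by rewrite !inE negb_or andbC.
  by [].
have e2 : forall v u, v \notin t -> u \notin t -> u != v -> f v u = - f u v.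
  move=> v u hv hu huv; rewrite /f (ord_signU _ hv) (ord_signU _ hu).
  rewrite (rsgC huv) setUCA; ring.
rewrite e1.
pose g v u := if (v \notin t) && (u \notin t) && (u != v) then f v u else 0.
have e3 : \sum_(v | v \notin t) \sum_(u | (u \notin t) && (u != v)) f v u
          = \sum_v \sum_u g v u.
  rewrite big_mkcond; apply: eq_bigr => v _; case: ifP => hv; last by rewrite big1 // => u _; rewrite /g hv.
  by rewrite big_mkcond; apply: eq_bigr => u _; rewrite /g hv.
rewrite e3.
suff : \sum_v \sum_u g v u = - \sum_v \sum_u g v u by lia.
rewrite {1}exchange_big -sumrN; apply: eq_bigr => u _; rewrite -sumrN.
apply: eq_bigr => v _; rewrite /g.
have hvu : (v != u) = (u != v) by rewrite eq_sym.
rewrite hvu; case hv: (v \notin t); case hu: (u \notin t); case huv: (u != v) => /=;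
  rewrite ?oppr0 //.
by apply: e2.
Qed.
End Gen.

End GenPart.
Import GenPart.
Module Gen2Part.
Local Open Scope ring_scope.

Section Gen2.
Variable T : finType.
Implicit Types (t s : {set T}) (x y c : chain T) (K : {set {set T}}).
Notation rhv := (reduced_homology_vanishes T).

Lemma sum_neq0 (P : pred T) (F : T -> int) :
  \sum_(v | P v) F v != 0 -> exists v, P v /\ F v != 0.
Proof.
move=> h; case: (boolP [exists v, P v && (F v != 0)]) => [/existsP [v /andP [hv hf]]|/existsPn hn].
  by exists v.
exfalso; move/eqP: h; apply.
by apply: big1 => v hv; move: (hn v); rewrite hv /= negbK => /eqP.
Qed.

Definition restr (w : T) c : chain T := [ffun t : {set T} => if w \in t then c t else 0].

Lemma subfE x y t : (x - y) t = x t - y t. Proof. by rewrite !ffunE. Qed.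
Lemma addfE x y t : (x + y) t = x t + y t. Proof. by rewrite !ffunE. Qed.
Lemma restrE w c t : restr w c t = if w \in t then c t else 0. Proof. by rewrite ffunE. Qed.
Lemma coneE a c t : cone a c t = if a \in t then ord_sign (t :\ a) a * c (t :\ a) else 0.
Proof. by rewrite ffunE. Qed.

Lemma oppfE x t : (- x) t = - x t. Proof. by rewrite !ffunE. Qed.

Lemma cone_acyc K j b :
  (forall s, s \in K -> #|s| = j.+1 -> b \notin s -> b |: s \in K) -> rhv K j.
Proof.
move=> hK c hc hb; exists (cone b c); split; last by rewrite bdry_cone hb cone0 subr0.
move=> t; rewrite ffunE; case: ifP => hbt; last by rewrite eqxx.
move=> h; have /hc [hs hsz] : c (t :\ b) != 0.
  by apply: contraNneq h => ->; rewrite mulr0.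
have hbn : b \notin t :\ b by rewrite !inE eqxx.
split; first by rewrite -(setD1K hbt); apply: hK.
by rewrite -(setD1K hbt) cardsU1 hbn hsz.
Qed.


Lemma elim_step K K' j w w' : w' != w ->
  (forall s, s \in K -> #|s| = j.+1 -> w \in s -> w' |: s \in K /\ w' |: (s :\ w) \in K) ->
  (forall s, s \in K' -> s \in K) ->
  (forall s, s \in K -> w \notin s -> s \in K') ->
  rhv K' j -> rhv K j.
Proof.
move=> hww hK hK'K hKK' hacyc c hc hb.
set cw := restr w c; set d1 := cone w' cw; set c1 := c - bdry d1.
have bc1 : bdry c1 = 0 by rewrite /c1 bdryB bdry2 hb subr0.
have hbw : forall t, w \in t -> bdry (restr w c) t = 0.
  move=> t ht; have := congr1 (fun f : chain T => f t) hb.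
  rewrite [X in _ = X -> _]ffunE => <-; rewrite !ffunE; apply: eq_bigr => v _.
  by rewrite ffunE !inE ht orbT.
have sc1 : is_chain_of K' j c1.
  move=> t; rewrite /c1 /d1 bdry_cone !subfE /cw restrE coneE.
  case: (boolP (w \in t)) => hwt.
    case: ifP => hw't; last by rewrite subr0 subrr eqxx.
    rewrite hbw ?mulr0 ?subr0 ?subrr ?eqxx //.
    by rewrite !inE hwt andbT eq_sym.
  rewrite sub0r opprK.
  case: (boolP (c t == 0)) => [/eqP ct0|ct0] h; last first.
    by have [hs hsz] := hc _ ct0; split => //; apply: hKK'.
  move: h; rewrite ct0 add0r; case: ifP => hw't; last by rewrite eqxx.
  move=> h; have h2 : bdry cw (t :\ w') != 0.
    by apply: contraNneq h => ->; rewrite mulr0.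
  move: h2; rewrite ffunE => /sum_neq0 [v [hv]].
  rewrite ffunE; case: ifP => hwv; last by rewrite mulr0 eqxx.
  move=> h3; have hcv : c (v |: t :\ w') != 0.
    by apply: contraNneq h3 => ->; rewrite mulr0.
  have hw0 : w \notin t :\ w' by rewrite !inE negb_and hwt orbT.
  have hvw : v = w.
    by move: hwv; rewrite !inE (negbTE hwt) andbF orbF => /eqP ->.
  subst v.
  have [hs hsz] := hc _ hcv.
  have := hK _ hs hsz (setU11 _ _) => -[_].
  rewrite setU1K // setD1K // => htK.
  split; first by apply: hKK'.
  by rewrite -(setD1K hw't) cardsU1 !inE eqxx /= -hsz cardsU1 (negbTE hw0).
have [d2 [hd2 bd2]] := hacyc c1 sc1 bc1.
exists (d1 + d2); split; last by rewrite bdryD bd2 /c1 addrC subrK.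
move=> t; rewrite ffunE.
case: (boolP (d2 t == 0)) => [/eqP ->|hd]; last first.
  by move=> _; have [? ?] := hd2 _ hd; split => //; apply: hK'K.
rewrite addr0 /d1 ffunE; case: ifP => hw't; last by rewrite eqxx.
move=> h; have : cw (t :\ w') != 0 by apply: contraNneq h => ->; rewrite mulr0.
rewrite ffunE; case: ifP => hws; last by rewrite eqxx.
move=> /hc [hs hsz].
have hn : w' \notin t :\ w' by rewrite !inE eqxx.
have := hK _ hs hsz hws => -[h1 _].
rewrite setD1K // in h1; split => //.
by rewrite -(setD1K hw't) cardsU1 hn hsz.
Qed.

Lemma dom_acyc K j (R : {set T}) (phi : T -> T) b :
  b \in R -> (forall w, w \notin R -> phi w \in R) ->
  (forall s w, s \in K -> #|s| = j.+1 -> w \in s -> w \notin R ->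
     phi w |: s \in K /\ phi w |: (s :\ w) \in K) ->
  (forall s, s \in K -> #|s| = j.+1 -> s \subset R -> b |: s \in K) ->
  rhv K j.
Proof.
move=> hbR hphi hd1 hd2.
pose KB (B : {set T}) := [set s in K | s :&: ~: R \subset B].
suff : forall n (B : {set T}), B \subset ~: R -> #|B| = n -> rhv (KB B) j.
  move=> /(_ _ (~: R) (subxx _) erefl).
  have -> : KB (~: R) = K.
    by apply/setP => s; rewrite !inE subsetIr andbT.
  by [].
elim => [|n IH] B; move: B => B hB hcard.
  apply: (@cone_acyc _ _ b) => s; rewrite !inE => /andP [hs hsB] hsz hbs.
  have hsR : s \subset R.
    apply/subsetP => x hx; apply/negPn/negP => hxR.
    have : x \in s :&: ~: R by rewrite !inE hx hxR.
    by move/(subsetP hsB); rewrite (cards0_eq hcard) inE.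
  rewrite hd2 //=; apply/subsetP => x; rewrite !inE => /andP [/orP [/eqP ->|hx] hxR].
    by rewrite hbR in hxR.
  by move: hxR; rewrite (subsetP hsR _ hx).
have : (0 < #|B|)%N by rewrite hcard.
case/card_gt0P => w hwB.
have hwR : w \notin R by move: (subsetP hB _ hwB); rewrite inE.
have hpw : phi w \in R := hphi _ hwR.
apply: (@elim_step _ (KB (B :\ w)) j w (phi w)).
- by apply: contraTneq hpw => ->.
- move=> s; rewrite !inE => /andP [hs hsB] hsz hws.
  have [h1 h2] := hd1 _ _ hs hsz hws hwR.
  rewrite h1 h2 /=; split; apply/subsetP => x; rewrite !inE => /andP [hx hxR];
    apply: (subsetP hsB); rewrite !inE hxR andbT.
    by move: hx => /orP [/eqP hx|//]; move: hxR; rewrite hx hpw.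
  by move: hx => /orP [/eqP hx|/andP [_ //]]; move: hxR; rewrite hx hpw.
- move=> s; rewrite !inE => /andP [hs hsB]; rewrite hs /=.
  by apply: subset_trans hsB (subD1set _ _).
- move=> s; rewrite !inE => /andP [hs hsB] hws; rewrite hs /=.
  apply/subsetP => x hx; rewrite !inE (subsetP hsB _ hx) andbT.
  by apply: contraNneq hws => <-; move: hx; rewrite inE => /andP [].
- apply: IH; first by apply: subset_trans hB; apply: subD1set.
  by move: hcard; rewrite (cardsD1 w B) hwB add1n => -[].
Qed.

Lemma mv_acyc K (A AP : {set {set T}}) (P : {set T}) b j :
  (forall s, s \in A -> s \in K) ->
  (forall s, s \in K -> #|s| = j.+2 -> (s \in A) || (s \subset P)) ->
  (forall s, s \subset P -> #|s| = j.+2 -> b |: s \in K) ->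
  (forall s v, s \in A -> s :\ v \in A) ->
  (forall s, s \in AP -> (s \in A) && (s \subset P)) ->
  (forall s, s \in A -> s \subset P -> #|s| = j.+1 -> s \in AP) ->
  rhv A j.+1 -> rhv AP j -> rhv K j.+1.
Proof.
move=> hAK hKA hPK hAd hAP hAAP hA hAPa c hc hb.
pose c' : chain T := [ffun t : {set T} => if t \subset P then c t else 0].
have hz : is_chain_of AP j (bdry c').
  move=> t ht0; move: (ht0); rewrite ffunE => /sum_neq0 [v [hv]].
  rewrite ffunE; case: ifP => hvP; last by rewrite mulr0 eqxx.
  move=> h; have hcv : c (v |: t) != 0 by apply: contraNneq h => ->; rewrite mulr0.
  have [hs hsz] := hc _ hcv.
  have htsz : #|t| = j.+1 by move: hsz; rewrite cardsU1 hv add1n => -[].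
  have htP : t \subset P by apply: subset_trans hvP; apply: subsetUr.
  have htA : t \in A.
    have : bdry (c - c') t != 0.
      by rewrite bdryB hb sub0r oppfE oppr_eq0.
    rewrite ffunE => /sum_neq0 [u [hu]].
    rewrite subfE ffunE; case: ifP => huP; first by rewrite subrr mulr0 eqxx.
    rewrite subr0 => h2; have hcu : c (u |: t) != 0 by apply: contraNneq h2 => ->; rewrite mulr0.
    have [hs2 hsz2] := hc _ hcu.
    move: (hKA _ hs2 hsz2); rewrite huP orbF => hA2.
    by have := hAd _ u hA2; rewrite setU1K.
  by split => //; apply: hAAP.
have [e [he be]] := hAPa _ hz (bdry2 _).
pose y := c' - e.
have by0 : bdry y = 0 by rewrite /y bdryB be subrr.
have hy : forall t, y t != 0 -> t \subset P /\ #|t| = j.+2.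
  move=> t; rewrite /y subfE /c' ffunE.
  case: (boolP (e t == 0)) => [/eqP ->|het].
    rewrite subr0; case: ifP => htP; last by rewrite eqxx.
    by move=> /hc [_ ->].
  by move=> _; have [/hAP /andP [_ ->] ->] := he _ het.
pose c1 := c - y.
have bc1 : bdry c1 = 0 by rewrite /c1 bdryB hb by0 subrr.
have hc1 : is_chain_of A j.+1 c1.
  move=> t; rewrite /c1 /y !subfE opprB addrA /c' ffunE.
  case: (boolP (e t == 0)) => [/eqP ->|het]; last first.
    by move=> _; have [/hAP /andP [-> _] ->] := he _ het.
  rewrite addr0; case: ifP => htP; first by rewrite subrr eqxx.
  rewrite subr0 => /hc [htK htsz]; split => //.
  by move: (hKA _ htK htsz); rewrite htP orbF.
have [d2 [hd2 bd2]] := hA c1 hc1 bc1.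
exists (cone b y + d2); split; last first.
  by rewrite bdryD bdry_cone by0 cone0 subr0 bd2 /c1 addrC subrK.
move=> t; rewrite addfE coneE.
case: (boolP (d2 t == 0)) => [/eqP ->|hd]; last first.
  by move=> _; have [? ?] := hd2 _ hd; split => //; apply: hAK.
rewrite addr0; case: ifP => hbt; last by rewrite eqxx.
move=> h; have : y (t :\ b) != 0 by apply: contraNneq h => ->; rewrite mulr0.
move=> /hy [hP hsz].
have hn : b \notin t :\ b by rewrite !inE eqxx.
split; first by rewrite -(setD1K hbt); apply: hPK.
by rewrite -(setD1K hbt) cardsU1 hn hsz.
Qed.
End Gen2.

End Gen2Part.
Import Gen2Part.

Notation rhv := (reduced_homology_vanishes (cube 4)).

Definition CF (f : {set cube 4}) (C : 'I_4 -> bool -> bool) : complex 4 :=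
  [set s : {set cube 4} | (s \subset f) &&
     [exists k, exists b, C k b && [forall x : cube 4 in s, x k == b]]].
Definition setc (l : 'I_4) (e : bool) (w : cube 4) : cube 4 :=
  [ffun i => if i == l then e else w i].
Definition half (l : 'I_4) (e : bool) : {set cube 4} := [set v : cube 4 | v l == e].

Lemma CF_intro (f : {set cube 4}) (C : 'I_4 -> bool -> bool) (s : {set cube 4}) k b : s \subset f -> C k b ->
  (forall x : cube 4, x \in s -> x k = b) -> s \in CF f C.
Proof.
move=> hs hC hx; rewrite inE hs /=; apply/existsP; exists k; apply/existsP; exists b.
by rewrite hC /=; apply/forallP => x; apply/implyP => /hx ->.
Qed.

Lemma CF_elim (f : {set cube 4}) (C : 'I_4 -> bool -> bool) (s : {set cube 4}) : s \in CF f C ->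
  s \subset f /\ exists k b, C k b /\ (forall x : cube 4, x \in s -> x k = b).
Proof.
rewrite inE => /andP [hs /existsP [k /existsP [b /andP [hC /forallP hx]]]].
split => //; exists k, b; split => // x hxs.
by move: (hx x); rewrite hxs => /eqP.
Qed.

Lemma CF_sub (f : {set cube 4}) (C : 'I_4 -> bool -> bool) (s t : {set cube 4}) : s \in CF f C -> t \subset s -> t \in CF f C.
Proof.
move=> /CF_elim [hs [k [b [hC hx]]]] hts.
apply: (CF_intro (k := k) (b := b)) => //; first by apply: subset_trans hs.
by move=> x /(subsetP hts) /hx.
Qed.

Lemma G1 (f : {set cube 4}) (C : 'I_4 -> bool -> bool) l e (b0 : cube 4) : (forall w, w \in f -> setc l e w \in f) -> C l e ->
  ~~ C l (~~ e) -> b0 \in f -> b0 l = e -> forall j, rhv (CF f C) j.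
Proof.
move=> hf hCe hCn hb0 hb0l j.
apply: (@dom_acyc _ _ j (half l e) (setc l e) b0).
- by rewrite inE hb0l.
- by move=> w _; rewrite inE ffunE eqxx.
- move=> s w hs hsz hws hwR.
  suff h1 : setc l e w |: s \in CF f C.
    split => //; apply: CF_sub h1 _; apply: setUS; apply: subD1set.
  have [hsf [k [b [hC hx]]]] := CF_elim hs.
  have hkl : k != l.
    apply/eqP => hkl; subst k.
    move: hwR; rewrite inE (hx _ hws) => hbe.
    have hb' : b = ~~ e by move: hbe; case: (b); case: (e).
    by move: hCn; rewrite -hb' hC.
  apply: (CF_intro (k := k) (b := b)) => //.
    apply/subsetP => x; rewrite !inE => /orP [/eqP ->|hxs].
      by apply: hf; apply: (subsetP hsf).
    by apply: (subsetP hsf).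
  move=> x; rewrite !inE => /orP [/eqP ->|hxs]; last by apply: hx.
  by rewrite ffunE (negbTE hkl) hx.
- move=> s hs hsz hsR; have [hsf _] := CF_elim hs.
  apply: (CF_intro (k := l) (b := e)) => //.
    apply/subsetP => x; rewrite !inE => /orP [/eqP ->|hxs] //.
    by apply: (subsetP hsf).
  move=> x; rewrite !inE => /orP [/eqP ->|hxs] //.
  by move: (subsetP hsR _ hxs); rewrite inE => /eqP.
Qed.

Lemma G0 (f : {set cube 4}) (C : 'I_4 -> bool -> bool) l e (b0 : cube 4) k0 : k0 != l -> (forall b, C k0 b) ->
  (forall w, w \in f -> setc l e w \in f) -> C l e ->
  b0 \in f -> b0 l = e -> rhv (CF f C) 0.
Proof.
move=> hk0 hCk0 hf hCe hb0 hb0l.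
apply: (@dom_acyc _ _ 0 (half l e) (setc l e) b0).
- by rewrite inE hb0l.
- by move=> w _; rewrite inE ffunE eqxx.
- move=> s w hs hsz hws hwR.
  suff h1 : setc l e w |: s \in CF f C.
    split => //; apply: CF_sub h1 _; apply: setUS; apply: subD1set.
  have [hsf _] := CF_elim hs.
  have [x hx] := cards1P (introT eqP hsz); subst s.
  move: hws; rewrite inE => /eqP ?; subst x.
  apply: (CF_intro (k := k0) (b := w k0)) => //.
    apply/subsetP => x; rewrite !inE => /orP [/eqP ->|hxs].
      by apply: hf; apply: (subsetP hsf); rewrite inE.
    by move/eqP: hxs => ->; apply: (subsetP hsf); rewrite inE.
  move=> x; rewrite !inE => /orP [/eqP ->|/eqP -> //].
  by rewrite ffunE (negbTE hk0).
- move=> s hs hsz hsR; have [hsf _] := CF_elim hs.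
  apply: (CF_intro (k := l) (b := e)) => //.
    apply/subsetP => x; rewrite !inE => /orP [/eqP ->|hxs] //.
    by apply: (subsetP hsf).
  move=> x; rewrite !inE => /orP [/eqP ->|hxs] //.
  by move: (subsetP hsR _ hxs); rewrite inE => /eqP.
Qed.

Definition CA (C : 'I_4 -> bool -> bool) l e := fun k b => C k b && ~~ ((k == l) && (b == e)).
Definition CAP (C : 'I_4 -> bool -> bool) (l : 'I_4) := fun k (b : bool) => C k b && (k != l).

Lemma MVCF (f : {set cube 4}) (C : 'I_4 -> bool -> bool) l e (bt : cube 4) j :
  bt \in f -> bt l = e -> C l e ->
  rhv (CF f (CA C l e)) j.+1 -> rhv (CF (f :&: half l e) (CAP C l)) j ->
  rhv (CF f C) j.+1.
Proof.
move=> hbt hbtl hCe hA hAP.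
apply: (@mv_acyc _ _ _ _ (f :&: half l e) bt j _ _ _ _ _ _ hA hAP).
- move=> s /CF_elim [hsf [k [b [hC hx]]]].
  by apply: (CF_intro (k := k) (b := b)) => //; move: hC => /andP [].
- move=> s /CF_elim [hsf [k [b [hC hx]]]] _.
  case: (boolP ((k == l) && (b == e))) => [/andP [/eqP hk /eqP hb]|hn].
    subst k b; rewrite orbC; apply/orP; left.
    apply/subsetP => x hxs; rewrite !inE (subsetP hsf _ hxs) /=.
    by rewrite (hx _ hxs).
  by apply/orP; left; apply: (CF_intro (k := k) (b := b)) => //; rewrite /CA hC.
- move=> s hsP _; apply: (CF_intro (k := l) (b := e)) => //.
    apply/subsetP => x; rewrite !inE => /orP [/eqP ->|hxs] //.
    by move: (subsetP hsP _ hxs); rewrite inE => /andP [].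
  move=> x; rewrite !inE => /orP [/eqP ->|hxs] //.
  by move: (subsetP hsP _ hxs); rewrite !inE => /andP [_ /eqP].
- by move=> s v hs; apply: CF_sub hs _; apply: subD1set.
- move=> s /CF_elim [hsf [k [b [hC hx]]]]; rewrite hsf andbT.
  apply: (CF_intro (k := k) (b := b)) => //.
    by apply: subset_trans hsf (subsetIl _ _).
  move: hC; rewrite /CAP /CA => /andP [-> hkl] /=.
  by rewrite negb_and hkl.
- move=> s /CF_elim [hsf [k [b [hC hx]]]] hsP hsz.
  apply: (CF_intro (k := k) (b := b)) => //.
  move: hC; rewrite /CA /CAP => /andP [-> hn] /=.
  apply/eqP => hkl; subst k.
  have : (0 < #|s|)%N by rewrite hsz.
  case/card_gt0P => x hxs.
  move: (subsetP hsP _ hxs); rewrite !inE (hx _ hxs) => /andP [_ hbe].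
  by move: hn; rewrite eqxx hbe.
Qed.

Definition i0 : 'I_4 := @Ordinal 4 0 isT.
Definition i1 : 'I_4 := @Ordinal 4 1 isT.
Definition i2 : 'I_4 := @Ordinal 4 2 isT.
Definition i3 : 'I_4 := @Ordinal 4 3 isT.

Lemma pres1 w : w \in setT :&: half i0 true -> setc i1 false w \in setT :&: half i0 true.
Proof. by rewrite !inE !ffunE /= => h; exact: h. Qed.
Lemma pres2 w : w \in (setT :&: half i0 true) :&: half i1 true ->
  setc i2 false w \in (setT :&: half i0 true) :&: half i1 true.
Proof. by rewrite !inE !ffunE /= => /andP [h h']; apply/andP; split; [exact: h|exact: h']. Qed.

Ltac side := try solve [ exact: pres1 | exact: pres2 | by rewrite ?in_setT ?ffunE
  | by move=> *; rewrite ?in_setT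
  | by rewrite !inE !ffunE ].

Lemma bd_acyc j : (j <= 2)%N -> rhv (CF setT (fun _ _ => true)) j.
Proof.
case: j => [|j] hj.
  by apply: (@G0 _ _ i0 false [ffun _ => false] i1) => //; side.
apply: (@MVCF _ _ i0 true [ffun _ => true]) => //; side.
  by apply: (@G1 _ _ i0 false [ffun _ => false]) => //; side.
case: j hj => [|j] hj.
  by apply: (@G0 _ _ i1 false [ffun i => i == i0] i2) => //; side.
case: j hj => [|j] hj //.
apply: (@MVCF _ _ i1 true [ffun _ => true]) => //; side.
  by apply: (@G1 _ _ i1 false [ffun i => i == i0]) => //; side.
by apply: (@G0 _ _ i2 false [ffun i => (i == i0) || (i == i1)] i3) => //; side.
Qed.

Definition top : subcube 4 := [ffun _ => None].

Lemma dim4_top (H : subcube 4) : sc_dim H = 4 -> H = top.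
Proof.
move=> hd; have hf : free_coords H = setT.
  apply/eqP; rewrite eqEcard subsetT cardsT card_ord /=.
  by move: hd; rewrite /sc_dim => ->.
apply/ffunP => i; rewrite ffunE.
by have := in_setT i; rewrite -hf inE => /eqP.
Qed.

Lemma dim3_facet (H : subcube 4) : sc_dim H = 3 -> exists k b, H = sc_fix top k b.
Proof.
move=> hd.
have hc : #|~: free_coords H| = 1.
  have := cardsC (free_coords H); rewrite card_ord.
  move: hd; rewrite /sc_dim => -> h; lia.
have [k hk] := cards1P (introT eqP hc).
have hkH : H k != None.
  have : k \in ~: free_coords H by rewrite hk inE.
  by rewrite !inE.
case hHk : (H k) hkH => [b|] // _.
exists k, b; apply/ffunP => i; rewrite !ffunE.
case: (i =P k) => [->|/eqP hik] //.
have : i \notin ~: free_coords H by rewrite hk inE.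
by rewrite !inE negbK => /eqP.
Qed.

Lemma hdist_le (k : 'I_4) (x y : cube 4) : x k = y k -> (hdist x y <= 3)%N.
Proof.
move=> hxy; rewrite /hdist.
have : [set i | x i != y i] \subset [set~ k].
  by apply/subsetP => i; rewrite !inE; apply: contra => /eqP ->; rewrite hxy.
by move/subset_leq_card; rewrite cardsC1 card_ord.
Qed.

Lemma VR3_facet k b (s : {set cube 4}) :
  (s \in VR3 (sc_fix top k b)) = [forall x : cube 4 in s, x k == b].
Proof.
have hv : forall v : cube 4, (v \in sc_verts (sc_fix top k b)) = (v k == b).
  move=> v; rewrite inE; apply/forallP/idP => [/(_ k)|hv i].
    by rewrite ffunE eqxx.
  by rewrite !ffunE; case: (i =P k) => [->|].
rewrite inE; apply/andP/forallP => [[/subsetP hs _] x|hx].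
  by apply/implyP => /hs; rewrite hv.
split.
  by apply/subsetP => x hxs; rewrite hv; move: (hx x); rewrite hxs.
apply/forallP => x; apply/implyP => hxs; apply/forallP => y; apply/implyP => hys.
move: (hx x) (hx y); rewrite hxs hys /= => /eqP h1 /eqP h2.
by apply: (hdist_le (k := k)); rewrite h1 h2.
Qed.

Lemma inX_iff (S : {set subcube 4}) : (forall H, H \in S -> sc_dim H = 3) ->
  forall s, (s \in \bigcup_(H in S) VR3 H) = (s \in CF setT (fun k b => sc_fix top k b \in S)).
Proof.
move=> hS s; apply/bigcupP/idP => [[H hH hs]|].
  have [k [b eH]] := dim3_facet (hS _ hH); subst H.
  apply: (CF_intro (k := k) (b := b) (subsetT s)) => //.
  move=> x hxs; move: hs; rewrite VR3_facet => /forallP /(_ x).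
  by rewrite hxs => /eqP.
move=> /CF_elim [_ [k [b [hC hx]]]]; exists (sc_fix top k b) => //.
by rewrite VR3_facet; apply/forallP => x; apply/implyP => /hx ->.
Qed.

Lemma bd_iff s : (s \in bdVR3 top) = (s \in CF setT (fun _ _ => true)).
Proof.
apply/bigcupP/idP => [[l _ /bigcupP [e _ hs]]|].
  apply: (CF_intro (k := l) (b := e) (subsetT s)) => //.
  move=> x hxs; move: hs; rewrite VR3_facet => /forallP /(_ x).
  by rewrite hxs => /eqP.
move=> /CF_elim [_ [k [b [_ hx]]]]; exists k; first by rewrite inE ffunE.
apply/bigcupP; exists b => //.
by rewrite VR3_facet; apply/forallP => x; apply/implyP => /hx ->.
Qed.

Theorem mainTheorem17 :
  forall X : complex 4, inW 4 3 X ->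
  forall j : nat, (j <= 2)%N -> reduced_homology_vanishes (cube 4) X j.
Proof.
move=> X [S [hS0 hSd hX hc]] j hj.
have [H0 [hd0 _ hbd]] := hc isT.
have eH0 := dim4_top hd0; subst H0.
case: (boolP (X == bdVR3 top)) => [/eqP ->|hne].
  have -> : bdVR3 top = CF setT (fun _ _ => true) by apply/setP => s; exact: bd_iff.
  exact: bd_acyc.
have [l [e [_ hin hnin]]] := hbd hne.
have eX : X = CF setT (fun k b => sc_fix top k b \in S).
  by rewrite hX; apply/setP => s; exact: inX_iff.
have hCe : sc_fix top l e \in S.
  have hs0 : half l e \in VR3 (sc_fix top l e).
    by rewrite VR3_facet; apply/forallP => x; apply/implyP; rewrite inE.
  move: (subsetP hin _ hs0); rewrite eX => /CF_elim [_ [k [b [hC hx]]]].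
  pose x0 : cube 4 := [ffun i => if i == l then e else ~~ b].
  have hx0 : x0 \in half l e by rewrite inE ffunE eqxx.
  move: (hx _ hx0); rewrite ffunE; case: eqP => [hk hb|_]; last by case: (b).
  by rewrite -hk hb.
have hCn : sc_fix top l (~~ e) \notin S.
  apply/negP => hS; move/negP: hnin; apply; rewrite hX; exact: (bigcup_sup _ hS).
rewrite eX; apply: (@G1 _ _ l e [ffun _ => e]) => //.
- by move=> w _; rewrite in_setT.
- by rewrite in_setT.
- by rewrite ffunE.
Qed.
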